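(* For $(n,m) \in \mathbb{Z}^2$ let $q_{(n,m)}(x) = x^4 + n x^3 + m x^2 + n x + 1$, and let $Q = \{(n,m) \in \mathbb{Z}^2 : q_{(n,m)} \text{ has no real root}\}$. Then $\rho(Q) = 0$, where for $L \subseteq \mathbb{Z}^2$ $$\rho(L) = \limsup_{K \to \infty} \frac{|\{(n,m) \in L : \|(n,m)\| \le K\}|}{|\{(n,m) \in \mathbb{Z}^2 : \|(n,m)\| \le K\}|}, \qquad \|(n,m)\| = \max\{|n|,|m|\}.$$ *)

(* Defs.v *)
From HB Require Import structures.
From mathcomp Require Import all_boot all_order all_algebra.
From mathcomp Require Import all_classical all_reals all_analysis.
Set Implicit Arguments. Unset Strict Implicit. Unset Printing Implicit Defensive.
Import Order.TTheory GRing.Theory Num.Theory.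
Local Open Scope ring_scope.

Definition qpoly (R : realType) (n m : int) : {poly R} :=
  'X^4 + n%:~R *: 'X^3 + m%:~R *: 'X^2 + n%:~R *: 'X + 1.

Definition inQ (R : realType) (p : int * int) : Prop :=
  ~ (exists x : R, root (qpoly R p.1 p.2) x).

Definition supnorm (p : int * int) : int := Num.max `|p.1| `|p.2|.

Definition intrange (K : nat) : seq int :=
  [seq (i%:Z - K%:Z) | i <- iota 0 (2 * K).+1].

Definition ballZ2 (K : nat) : seq (int * int) :=
  [seq p <- [seq (a, b) | a <- intrange K, b <- intrange K]
     | supnorm p <= K%:Z].

Definition countL (L : int * int -> Prop) (K : nat) : nat :=
  count (fun p => `[< L p >]) (ballZ2 K).

Definition ratioL (R : realType) (L : int * int -> Prop) (K : nat) : R :=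
  (countL L K)%:R / (size (ballZ2 K))%:R.

Definition rho (R : realType) (L : int * int -> Prop) : R :=
  limn_sup (ratioL R L).

(* Main.v *)
Require Import Defs.
From mathcomp Require Import all_boot all_order all_algebra.
From mathcomp Require Import all_classical all_reals all_analysis.
From mathcomp Require Import ring lra zify.
Import Order.TTheory GRing.Theory Num.Theory.
Local Open Scope ring_scope.
Lemma qpolyE (R : realType) (n m : int) (x : R) :
  (Defs.qpoly R n m).[x] = x^+4 + n%:~R * x^+3 + m%:~R * x^+2 + n%:~R * x + 1.
Proof. by rewrite /qpoly !hornerE. Qed.

Lemma root_of_t (R : realType) (n m : int) (t : R) :
  t^+2 + n%:~R * t + m%:~R - 2 = 0 -> 4 <= t^+2 -> exists x : R, root (Defs.qpoly R n m) x.
Proof.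
move=> ht ht2.
set s := Num.sqrt (t^+2 - 4).
have hs : s^+2 = t^+2 - 4 by rewrite sqr_sqrtr // subr_ge0.
exists ((t - s)/2); apply/rootP; rewrite qpolyE.
have -> : m%:~R = 2 - t^+2 - n%:~R * t :> R by lra.
set x := (t - s)/2.
have hx : x^+2 - t * x + 1 = 0 by rewrite /x; nra.
have -> : x ^+ 4 + n%:~R * x ^+ 3 + (2 - t ^+ 2 - n%:~R * t) * x ^+ 2 + n%:~R * x + 1
   = (x^+2 - t * x + 1) * (x^+2 + (n%:~R + t) * x + 1) by ring.
by rewrite hx mul0r.
Qed.

Lemma notQ (R : realType) (n m : int) : (4 <= `|n|)%R -> (4 * m - 8 <= n^+2)%R ->
  exists x : R, root (Defs.qpoly R n m) x.
Proof.
move=> hn hm.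
have hD : (0:R) <= n%:~R^+2 - 4 * m%:~R + 8.
  have : ((4 * m - 8)%:~R <= (n^+2)%:~R :> R) by rewrite ler_int.
  rewrite rmorphXn /= rmorphB /= rmorphM /=. lra.
set s := Num.sqrt (n%:~R^+2 - 4 * m%:~R + 8 : R).
have hs : s^+2 = n%:~R^+2 - 4 * m%:~R + 8 by rewrite sqr_sqrtr.
have s0 : 0 <= s by apply: sqrtr_ge0.
have [n0|n0] := lerP 0 n.
- have hn' : (4:R) <= n%:~R.
    have : (4 <= n)%R by move: hn; rewrite ger0_norm.
    by rewrite -(ler_int R).
  apply: (@root_of_t R n m ((- n%:~R - s)/2)); [| nra].
  by nra.
- have hn' : n%:~R <= (-4:R).
    have : (n <= -4)%R by move: hn; rewrite ltr0_norm //; lia.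
    by rewrite -(ler_int R).
  apply: (@root_of_t R n m ((- n%:~R + s)/2)); [| nra].
  by nra.
Qed.

Lemma mem_intrange (K : nat) (a : int) : (a \in intrange K) = (`|a| <= K%:Z).
Proof.
rewrite /intrange; apply/mapP/idP.
- by case=> i; rewrite mem_iota => /andP[_ hi] ->; lia.
- move=> ha; exists (absz (a + K%:Z)); last by lia.
  by rewrite mem_iota; lia.
Qed.

Lemma uniq_intrange K : uniq (intrange K).
Proof.
rewrite /intrange map_inj_uniq ?iota_uniq // => i j /= h; lia.
Qed.

Lemma ballZ2E K : ballZ2 K = [seq (a, b) | a <- intrange K, b <- intrange K].
Proof.
rewrite /ballZ2 (@eq_in_filter _ _ predT); first exact: filter_predT.
move=> p /allpairsP [[a b] [/= ha hb ->]].
move: ha hb; rewrite !mem_intrange /supnorm /= => ha hb.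
by rewrite /= ge_max ha hb.
Qed.

Lemma size_ballZ2 K : size (ballZ2 K) = ((2 * K).+1 * (2 * K).+1)%N.
Proof. by rewrite ballZ2E size_allpairs /intrange size_map size_iota. Qed.

Lemma count_sub_in (T : eqType) (a1 a2 : pred T) (s : seq T) :
  {in s, forall x, a1 x -> a2 x} -> (count a1 s <= count a2 s)%N.
Proof.
elim: s => //= x s IH h.
rewrite leq_add //; last by apply: IH => y hy; apply: h; rewrite inE hy orbT.
case: (a1 x) (h x (mem_head _ _)) => // -> //.
Qed.

Lemma count_allpairs_fst (S : pred int) (s t : seq int) :
  count (fun p : int * int => S p.1) [seq (a, b) | a <- s, b <- t]
  = (count S s * size t)%N.
Proof.
elim: s => //= a s IH; rewrite count_cat IH count_map.
rewrite (@eq_count _ _ (fun _ => S a)) //.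
have -> : count (fun _ => S a) t = (S a * size t)%N.
  by clear IH; case: (S a); elim: t => //= ? ? ->.
by rewrite mulnDl.

Qed.

Lemma count_small (K B : nat) :
  (count (fun a : int => (`|a| <= B%:Z)%R) (intrange K) <= (2 * B).+1)%N.
Proof.
rewrite -size_filter.
have -> : (2 * B).+1 = size (intrange B) by rewrite /intrange size_map size_iota.
apply: uniq_leq_size; first by rewrite filter_uniq // uniq_intrange.
by move=> x; rewrite mem_filter !mem_intrange => /andP[].
Qed.

Lemma inQ_small (R : realType) (K N : nat) (n m : int) : (0 < N)%N ->
  `|n| <= K%:Z -> `|m| <= K%:Z -> inQ R (n, m) ->
  `|n| <= (4 + N + (4 * K) %/ N)%N%:Z.
Proof.
move=> N0 hn hm hQ; rewrite leNgt; apply/negP => hb; apply: hQ => /=.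
have h1 := ltn_ceil (4 * K) N0.
set d := ((4 * K) %/ N)%N in hb h1 *.
have e : n ^+ 2 = `|n| * `|n| by rewrite -normrM -expr2 ger0_norm // sqr_ge0.
have hb' : (4 + N + d)%:Z < `|n| by [].
have h1' : (4 * K)%:Z < (d.+1 * N)%:Z by rewrite ltz_nat.
have n0 : 0 <= `|n| by [].
rewrite PoszD PoszM in hb' h1'.
apply: notQ; first by lia.
rewrite e; move: hb' h1' n0 hm; generalize `|n| => a. 
rewrite !PoszD !PoszM; nia.
Qed.

Lemma countL_bound (R : realType) (K N : nat) : (0 < N)%N ->
  (countL (@inQ R) K <= (2 * K).+1 * (2 * (4 + N + (4 * K) %/ N)).+1)%N.
Proof.
move=> N0; rewrite /countL ballZ2E.
set B := (4 + N + (4 * K) %/ N)%N.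
apply: leq_trans (@count_sub_in _ _ (fun p : int * int => (`|p.1| <= B%:Z)%R) _ _) _.
  move=> [a b] /allpairsP [[a' b'] [/= ha hb [-> ->]]] /asboolP hQ /=.
  by apply: (@inQ_small R K N a' b' N0 _ _ hQ); rewrite -mem_intrange.
rewrite (count_allpairs_fst (fun a : int => (`|a| <= B%:Z)%R)) /intrange size_map size_iota mulnC leq_mul2l.
by rewrite count_small orbT.
Qed.

Lemma ratio_le (R : realType) (K N : nat) (e : R) : (0 < N)%N -> 0 < e ->
  8 <= e * N%:R -> (9 + 2 * N%:R) * 2 <= e * K%:R ->
  ratioL R (@inQ R) K <= e.
Proof.
move=> N0 e0 hN hK.
have hc := @countL_bound R K N N0.
set c := countL (@inQ R) K in hc *.
set d := ((4 * K) %/ N)%N in hc.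
have hd : (d * N <= 4 * K)%N by apply: leq_trunc_div.
rewrite /ratioL size_ballZ2.
have hc' : (c%:R : R) <= (2 * K%:R + 1) * (2 * (4 + N%:R + d%:R) + 1).
  have E : ((2 * K).+1 * (2 * (4 + N + d)).+1)%:R
     = (2 * K%:R + 1) * (2 * (4 + N%:R + d%:R) + 1) :> R.
    
    ring.
  by rewrite -E ler_nat.
have hd' : (d%:R : R) * N%:R <= 4 * K%:R.
  by have := hd; rewrite -(ler_nat R) !natrM.
have k0 : (0 : R) <= K%:R by [].
have n1 : (1 : R) <= N%:R by rewrite ler1n.
have d0 : (0 : R) <= d%:R by [].
rewrite -/c natrM -!natr1 !natrM.
rewrite ler_pdivrMr; last by nra.
set k := (K%:R : R) in hc' hd' k0 hK *.
set nn := (N%:R : R) in hc' hd' n1 hN hK *.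
set dd := (d%:R : R) in hc' hd' d0 *.
have h2 : 2 * dd <= e * k.
  have : 0 <= (e * k - 2 * dd) * nn by nra.
  by rewrite pmulr_lge0 ?subr_ge0 //; lra.
have h3 : 2 * (4 + nn + dd) + 1 <= 3 / 2 * (e * k) by lra.
have h4 : (2 * k + 1) * (2 * (4 + nn + dd) + 1) <= (2 * k + 1) * (3 / 2 * (e * k)).
  by rewrite ler_wpM2l //; lra.
have h5 : 0 <= e * k by nra.
nra.
Qed.

Import numFieldNormedType.Exports.
Local Open Scope classical_set_scope.
Local Open Scope ring_scope.

Theorem mainTheorem5 (R : realType) : rho R (@inQ R) = 0.
Proof.
rewrite /rho.
suff h : ratioL R (@inQ R) @ \oo --> (0 : R) by exact: (cvg_limn_inf_sup h).2.
apply/cvgrPdist_le => e e0.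
pose N := (Num.Def.archi_bound (8 / e)).+1.
have hN : 8 <= e * N%:R.
  have := @archi_boundP R (8 / e); rewrite divr_ge0 ?(ltW e0) // => /(_ isT) h.
  have : 8 / e <= N%:R by apply: (le_trans (ltW h)); rewrite ler_nat.
  by rewrite ler_pdivrMr // mulrC.
pose M := Num.Def.archi_bound ((9 + 2 * N%:R) * 2 / e).
exists M => // K /= hK.
have r0 : 0 <= ratioL R (@inQ R) K by rewrite /ratioL divr_ge0.
rewrite sub0r normrN ger0_norm //.
apply: (@ratio_le R K N e) => //.
have := @archi_boundP R ((9 + 2 * N%:R) * 2 / e).
have hp : 0 <= (9 + 2 * N%:R) * 2 / e :> R.
  by apply: divr_ge0; [apply: mulr_ge0; [apply: addr_ge0 |] | apply: ltW].
move=> /(_ hp) h.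
have : (9 + 2 * N%:R) * 2 / e <= K%:R by apply: (le_trans (ltW h)); rewrite ler_nat.
rewrite ler_pdivrMr // => h2; lra.
Qed.
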